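(* Let $p>2$ be a prime which is not a Wieferich prime, and let $n$ be a positive integer not divisible by $p$. Then $P(p^2,n)=pP(p,n)$ and $P(p^3,n)=p^2P(p,n)$.
   Context: For positive integers $m,n$, let $\mathbf{Z}_m$ be the integers modulo $m$ and $T:\mathbf{Z}_m^n\to\mathbf{Z}_m^n$, $T(a_0,\dots,a_{n-1})=(a_0+a_1,a_1+a_2,\dots,a_{n-1}+a_0)$. For $\mathbf{a}\in\mathbf{Z}_m^n$ the cycle length of $(T^k\mathbf{a})_{k\ge0}$ is the smallest positive integer $P$ such that there is $N$ with $T^{k+P}\mathbf{a}=T^k\mathbf{a}$ for all $k\ge N$. $P(m,n)$ denotes the maximum of these cycle lengths over all $\mathbf{a}\in\mathbf{Z}_m^n$. A prime $p$ is a Wieferich prime if $2^{p-1}\equiv1\pmod{p^2}$. *)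

(* Defs.v *)
From mathcomp Require Import all_boot.
Set Implicit Arguments. Unset Strict Implicit. Unset Printing Implicit Defensive.

(* Elements of Z_m^n are represented by functions 'I_n -> nat, entries read
   modulo m; indices are cyclic (ordS i = i+1 mod n). *)
Definition Tmap (m n : nat) (a : 'I_n -> nat) : 'I_n -> nat :=
  fun i => (a i + a (ordS i)) %% m.

Definition vec_eqm (m n : nat) (a b : 'I_n -> nat) : Prop :=
  forall i : 'I_n, a i = b i %[mod m].

Definition is_eventual_period (m n : nat) (a : 'I_n -> nat) (P : nat) : Prop :=
  exists N, forall k, N <= k ->
    vec_eqm m (iter (k + P) (@Tmap m n) a) (iter k (@Tmap m n) a).

Definition cycle_length (m n : nat) (a : 'I_n -> nat) (P : nat) : Prop :=
  0 < P /\ is_eventual_period m a P /\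
  forall Q, 0 < Q -> is_eventual_period m a Q -> P <= Q.

Definition is_Pmax (m n L : nat) : Prop :=
  (exists a : 'I_n -> nat, cycle_length m a L) /\
  forall (a : 'I_n -> nat) (P : nat), cycle_length m a P -> P <= L.

Definition wieferich (p : nat) : Prop := 2 ^ p.-1 = 1 %[mod p ^ 2].

(* Main.v *)
Require Import Defs.
From mathcomp Require Import all_boot.
From mathcomp Require Import all_algebra cyclic zify.
From Stdlib Require Import Classical.
Import GRing.Theory.


Lemma pow2_gcd (M a b : nat) : 2 ^ a = 1 %[mod M] -> 2 ^ b = 1 %[mod M] ->
  2 ^ (gcdn a b) = 1 %[mod M].
Proof.
move=> Ha Hb; case: (posnP a) => [->|a0]; first by rewrite gcd0n.
have [x _ /dvdnP [c Hc]] := Bezoutl b a0.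
have Hbx : (2 ^ b) ^ x = 1 %[mod M] by rewrite -modnXm Hb modnXm exp1n.
have Hac : (2 ^ a) ^ c = 1 %[mod M] by rewrite -modnXm Ha modnXm exp1n.
have E : 2 ^ (gcdn a b) * (2 ^ b) ^ x = (2 ^ a) ^ c.
  by rewrite -expnM -expnD (mulnC b x) Hc mulnC expnM.
by rewrite -Hac -E -modnMmr Hbx modnMmr muln1.
Qed.

Arguments pow2_gcd {M a b}.

Lemma odd_cop2 p k : prime p -> 2 < p -> coprime (p ^ k) 2.
Proof.
move=> pp p2; apply: coprimeXl; rewrite coprime_sym coprime2n.
by case: (even_prime pp) => // p2'; rewrite p2' in p2.
Qed.

Lemma nw1 p Q : prime p -> 2 < p -> ~ wieferich p -> p ^ 2 %| 2 ^ Q - 1 -> p %| Q.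
Proof.
move=> pp p2 nw H; apply/negP => /negP npQ; apply: nw.
have HQ : 2 ^ Q = 1 %[mod p ^ 2].
  by apply/eqP; rewrite eqn_mod_dvd ?expn_gt0.
have cQ : coprime Q p by rewrite coprime_sym prime_coprime.
have cop : coprime 2 (p ^ 2) by rewrite coprime_sym odd_cop2.
have HE := Euler_exp_totient cop.
rewrite totient_pfactor // expn1 in HE.
have := pow2_gcd HQ HE; rewrite mulnC Gauss_gcdr // => Hg.
rewrite /wieferich; have /dvdnP [k ->] := dvdn_gcdr Q p.-1.
by rewrite mulnC expnM -modnXm Hg modnXm exp1n.
Qed.

Lemma binom_lift p t : prime p -> 2 < p ->
  p ^ 3 %| (1 + p * t) ^ p - (1 + p ^ 2 * t).
Proof.
move=> pp p2.
rewrite expnDn.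
case: p pp p2 => // p' pp p2.
rewrite big_ord_recl big_ord_recl /bump /= !exp1n ?bin0 ?expn0 ?bin1 ?expn1 !mul1n.
rewrite mulnA mulnn addnA addKn.
apply: dvdn_sum => i _.
rewrite /bump /= !add1n exp1n mul1n expnMn.
case: (ltnP i.+2 p'.+1) => Hi.
- have -> : p'.+1 ^ 3 = p'.+1 * p'.+1 ^ 2 by rewrite expnS.
  apply: dvdn_mul; first by apply: prime_dvd_bin.
  by apply: dvdn_mulr; apply: dvdn_exp2l.
- apply: dvdn_mull; apply: dvdn_mulr; apply: dvdn_exp2l.
  exact: leq_trans p2 Hi.
Qed.

Lemma bern a k : 1 + k * a <= (1 + a) ^ k.
Proof.
elim: k => [|k IH]; first by rewrite mul0n addn0 expn0.
rewrite expnS; have : (1 + a) * (1 + k * a) <= (1 + a) * (1 + a) ^ k by rewrite leq_mul2l IH orbT.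
apply: leq_trans; rewrite mulSn mulnDl mul1n mulnDr muln1.
by rewrite (addnC a (k * a)) addnA leq_add2l leq_addr.
Qed.

Lemma nw2 p Q : prime p -> 2 < p -> ~ wieferich p -> p ^ 3 %| 2 ^ Q - 1 -> p ^ 2 %| Q.
Proof.
move=> pp p2 nw H.
have pQ : p %| Q.
  apply: nw1 => //; apply: dvdn_trans H; exact: dvdn_exp2l.
have [q Hq] := dvdnP pQ.
rewrite Hq expnS expn1 dvdn_pmul2r ?prime_gt0 //.
apply/negP => /negP npq; apply: nw.
have HQ : 2 ^ Q = 1 %[mod p ^ 3].
  by apply/eqP; rewrite eqn_mod_dvd ?expn_gt0.
have cq : coprime q p by rewrite coprime_sym prime_coprime.
have cop : coprime 2 (p ^ 3) by rewrite coprime_sym odd_cop2.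
have HE := Euler_exp_totient cop.
rewrite totient_pfactor // in HE.
have := pow2_gcd HQ HE.
have -> : p.-1 * p ^ 3.-1 = p * (p * p.-1) by rewrite /= expnS expn1 mulnC mulnA.
rewrite Hq (mulnC q p) -muln_gcdr Gauss_gcdr // => Hg.
have Hx : (2 ^ p.-1) ^ p = 1 %[mod p ^ 3].
  have /dvdnP [k Hk] := dvdn_gcdr q p.-1.
  by rewrite -expnM mulnC Hk mulnCA mulnC expnM -modnXm Hg modnXm exp1n.
have cop1 : coprime 2 p by rewrite coprime_sym -(expn1 p) odd_cop2.
have Hf := Euler_exp_totient cop1.
rewrite totient_prime // in Hf.
have x1 : 1 <= 2 ^ p.-1 by rewrite expn_gt0.
have /dvdnP [t Ht] : p %| 2 ^ p.-1 - 1.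
  by rewrite -eqn_mod_dvd // Hf modn_small // prime_gt1.
have Ex : 2 ^ p.-1 = 1 + p * t by rewrite -(subnKC x1) Ht mulnC.
rewrite /wieferich Ex.
have B := @binom_lift p t pp p2.
rewrite Ex in Hx.
have Hx' : p ^ 3 %| (1 + p * t) ^ p - 1.
  by rewrite -eqn_mod_dvd ?expn_gt0 ?addn_gt0 // Hx.
have L1 : 1 + p ^ 2 * t <= (1 + p * t) ^ p.
  by have := bern (p * t) p; rewrite mulnA mulnn.
have : p ^ 3 %| p ^ 2 * t.
  have := dvdn_sub Hx' B.
  move: L1; set X := (1 + p * t) ^ p; set Y := p ^ 2 * t => L1.
  have -> : X - 1 - (X - (1 + Y)) = Y by clear -L1; lia.
  by [].
rewrite expnS mulnC dvdn_pmul2l ?expn_gt0 ?prime_gt0 // => pt.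
apply/eqP; rewrite eqn_mod_dvd ?addn_gt0 // addKn expnS expn1.
by rewrite dvdn_pmul2l ?prime_gt0.
Qed.

Local Open Scope ring_scope.

Definition Sm n : 'M[int]_n.+1 := \matrix_(i, j) ((j == ordS i)%:R).
Definition Tm n : 'M[int]_n.+1 := 1 + Sm n.
Definition dvdM (d : int) m1 m2 (A : 'M[int]_(m1, m2)) := forall i j, (d %| A i j)%Z.
Arguments dvdM d {m1 m2} A.

Lemma SmE n m (w : 'M[int]_(n.+1, m)) : Sm n *m w = \matrix_(i, k) w (ordS i) k.
Proof.
apply/matrixP => i k; rewrite !mxE (bigD1 (ordS i)) //= mxE eqxx mul1r big1 ?addr0 //.
by move=> j /negbTE hj; rewrite mxE hj mul0r.
Qed.

Lemma SmXE n m t (w : 'M[int]_(n.+1, m)) :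
  Sm n ^+ t *m w = \matrix_(i, k) w (iter t (@ordS _) i) k.
Proof.
elim: t => [|t IH].
  by rewrite expr0 mul1mx; apply/matrixP => i k; rewrite mxE.
rewrite exprS -mulmxE -mulmxA IH SmE; apply/matrixP => i k; rewrite !mxE.
by rewrite iterSr.
Qed.

Lemma iter_ordS n t (i : 'I_n.+1) : val (iter t (@ordS _) i) = ((i + t) %% n.+1)%N.
Proof.
elim: t => [|t IH]; first by rewrite addn0 modn_small.
rewrite iterS /= IH addnS -[((_ %% _)%N).+1]addn1 modnDml addn1.
by [].
Qed.

Lemma TmE n m (w : 'M[int]_(n.+1, m)) : Tm n *m w = \matrix_(i, k) (w i k + w (ordS i) k).
Proof.
by rewrite /Tm mulmxDl mul1mx SmE; apply/matrixP => i k; rewrite !mxE.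
Qed.

Lemma dvdM_mulr d m1 m2 m3 (A : 'M_(m1, m2)) (B : 'M_(m2, m3)) : dvdM d A -> dvdM d (A *m B).
Proof. move=> H i j; rewrite mxE; apply: rpred_sum => k _; exact: dvdz_mulr. Qed.

Lemma dvdM_mull d m1 m2 m3 (A : 'M_(m1, m2)) (B : 'M_(m2, m3)) : dvdM d B -> dvdM d (A *m B).
Proof. move=> H i j; rewrite mxE; apply: rpred_sum => k _; exact: dvdz_mull. Qed.

Lemma dvdM_mul d e m1 m2 m3 (A : 'M_(m1, m2)) (B : 'M_(m2, m3)) :
  dvdM d A -> dvdM e B -> dvdM (d * e) (A *m B).
Proof. move=> HA HB i j; rewrite mxE; apply: rpred_sum => k _; exact: dvdz_mul. Qed.

Lemma dvdMD d m1 m2 (A B : 'M_(m1, m2)) : dvdM d A -> dvdM d B -> dvdM d (A + B).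
Proof. by move=> HA HB i j; rewrite mxE rpredD. Qed.

Lemma dvdMB d m1 m2 (A B : 'M_(m1, m2)) : dvdM d A -> dvdM d B -> dvdM d (A - B).
Proof. by move=> HA HB i j; rewrite !mxE rpredB. Qed.

Lemma dvdM0 d m1 m2 : dvdM d (0 : 'M_(m1, m2)).
Proof. by move=> i j; rewrite mxE rpred0. Qed.

Lemma dvdM_sum d m1 m2 (I : finType) (F : I -> 'M_(m1, m2)) :
  (forall i, dvdM d (F i)) -> dvdM d (\sum_i F i).
Proof. by move=> H i j; rewrite summxE; apply: rpred_sum => k _; exact: H. Qed.

Lemma dvdM_trans d e m1 m2 (A : 'M_(m1, m2)) : (e %| d)%Z -> dvdM d A -> dvdM e A.
Proof. by move=> ed H i j; apply: dvdz_trans ed (H i j). Qed.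

Lemma dvdM_muln (k c : nat) m1 m2 (A : 'M_(m1, m2)) : (k %| c)%N -> dvdM k%:Z (A *+ c).
Proof.
move=> /dvdnP [q ->] i j; rewrite mulmxnE -mulr_natr natrM mulrA.
by apply: dvdz_mull; rewrite natz.
Qed.

Lemma dvdM_expr d n (A B : 'M[int]_n.+1) k : dvdM d (A - B) -> dvdM d (A ^+ k - B ^+ k).
Proof.
move=> H; elim: k => [|k IH]; first by rewrite !expr0 subrr; exact: dvdM0.
have -> : A ^+ k.+1 - B ^+ k.+1 = A * (A ^+ k - B ^+ k) + (A - B) * B ^+ k.
  by rewrite !exprS mulrBr mulrBl addrA subrK.
by apply: dvdMD; rewrite -mulmxE; [apply: dvdM_mull | apply: dvdM_mulr].
Qed.

Lemma frobM n p (Y : 'M[int]_n.+1) : prime p -> dvdM p%:Z ((Y + 1) ^+ p - (Y ^+ p + 1)).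
Proof.
move=> pp; case: p pp => // p pp.
rewrite exprD1n big_ord_recr big_ord_recl /= binn bin0 expr0 !mulr1n.
have E : forall M Z : 'M[int]_n.+1, 1 + M + Z - (Z + 1) = M.
  by move=> M Z; rewrite addrAC (addrC Z 1) opprD addrA subrK addrAC subrr add0r.
rewrite E; apply: dvdM_sum => i; apply: dvdM_muln; apply: prime_dvd_bin => //.
by rewrite /bump /= add1n ltnS ltn_ord.
Qed.

Lemma frob_iter n p r : prime p -> dvdM p%:Z ((Sm n + 1) ^+ (p ^ r) - (Sm n ^+ (p ^ r) + 1)).
Proof.
move=> pp; elim: r => [|r IH]; first by rewrite expn0 !expr1 subrr; exact: dvdM0.
rewrite expnSr !exprM.
have -> : ((Sm n + 1) ^+ (p ^ r)%N) ^+ p - ((Sm n ^+ (p ^ r)%N) ^+ p + 1) =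
  (((Sm n + 1) ^+ (p ^ r)%N) ^+ p - (Sm n ^+ (p ^ r)%N + 1) ^+ p) +
  ((Sm n ^+ (p ^ r)%N + 1) ^+ p - ((Sm n ^+ (p ^ r)%N) ^+ p + 1)).
  by rewrite addrA subrK.
apply: dvdMD; [exact: dvdM_expr | exact: frobM].
Qed.

Lemma SmX1 n t : (t %% n.+1 = 1 %% n.+1)%N -> Sm n ^+ t = Sm n.
Proof.
move=> Ht; have E1 := SmXE _ _ t (1%:M : 'M[int]_n.+1); have E2 := SmE _ _ (1%:M : 'M[int]_n.+1).
rewrite !mulmx1 in E1 E2; rewrite E1 E2.
apply/matrixP => i k; rewrite !mxE; congr ((_ == _)%:R).
apply: val_inj.
by rewrite iter_ordS /= -modnDmr Ht modnDmr addn1.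
Qed.

Lemma comm_ST n : GRing.comm (Sm n) (Tm n).
Proof. by rewrite /GRing.comm /Tm mulrDr mulrDl mulr1 mul1r. Qed.

Definition va n (a : 'I_n.+1 -> nat) : 'cV[int]_n.+1 := \col_i (a i)%:Z.
Arguments va {n} a.
Definition e0nat n : 'I_n.+1 -> nat := fun i => (i == ord0 : nat).

Definition OpP n d P := exists K, dvdM d (Tm n ^+ K * (Tm n ^+ P - 1)).
Definition vP n d (v : 'cV[int]_n.+1) P :=
  exists K, forall k, (K <= k)%N -> dvdM d ((Tm n ^+ (k + P) - Tm n ^+ k) *m v).

Lemma OpP_vP n d P v : OpP n d P -> vP n d v P.
Proof.
move=> [K HK]; exists K => k Kk.
have -> : Tm n ^+ (k + P) - Tm n ^+ k = Tm n ^+ (k - K) * (Tm n ^+ K * (Tm n ^+ P - 1)).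
  by rewrite mulrA -exprD subnK // mulrBr mulr1 -exprD.
by rewrite -mulmxE; apply: dvdM_mulr; apply: dvdM_mull.
Qed.

Lemma colgen n d (A : 'M[int]_n.+1) : GRing.comm A (Sm n) -> dvdM d (A *m va (e0nat n)) -> dvdM d A.
Proof.
move=> cA H i j.
set t := (n.+1 - j)%N.
have Ecol : Sm n ^+ t *m va (e0nat n) = \col_k ((k == j) : nat)%:Z.
  rewrite SmXE; apply/matrixP => k l; rewrite !mxE /e0nat.
  congr (Posz (nat_of_bool _)).
  have H0 : ((j + t) %% n.+1 = 0)%N by rewrite subnKC ?modnn // ltnW.
  by rewrite -val_eqE iter_ordS /= -H0 eqn_modDr !modn_small.
have -> : A i j = (A *m (Sm n ^+ t *m va (e0nat n))) i 0.
  rewrite Ecol mxE (bigD1 j) //= mxE eqxx mulr1 big1 ?addr0 //.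
  by move=> k /negbTE hk; rewrite mxE hk mulr0.
rewrite mulmxA mulmxE (commrX t cA) -mulmxE -mulmxA SmXE mxE.
exact: H.
Qed.

Lemma vP_OpP n d P : vP n d (va (e0nat n)) P -> OpP n d P.
Proof.
move=> [K HK]; exists K; apply: colgen.
  apply: commr_sym; apply: commrM; first exact: commrX (comm_ST n).
  by apply: commrB; [exact: commrX (comm_ST n) | exact: commr1].
have := HK K (leqnn K).
by rewrite mulrBr mulr1 -exprD.
Qed.

Lemma vP_sub n d v P Q : vP n d v P -> vP n d v Q -> (P <= Q)%N -> vP n d v (Q - P).
Proof.
move=> [K1 H1] [K2 H2] PQ; exists (K1 + K2)%N => k Hk.
have E : (k + (Q - P) + P = k + Q)%N by rewrite -addnA subnK.
have -> : Tm n ^+ (k + (Q - P)) - Tm n ^+ k =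
  (Tm n ^+ (k + Q) - Tm n ^+ k) - (Tm n ^+ (k + (Q - P) + P) - Tm n ^+ (k + (Q - P))).
  by rewrite E opprB [RHS]addrC [RHS]addrA subrK.
rewrite mulmxBl; apply: dvdMB.
  by apply: H2; apply: leq_trans Hk; apply: leq_addl.
apply: H1; apply: leq_trans (leq_addr _ _); apply: leq_trans Hk; apply: leq_addr.
Qed.

Arguments vP_sub {n d v P Q}.

Lemma vP_mod n d v P Q : vP n d v P -> vP n d v Q -> vP n d v (Q %% P)%N.
Proof.
move=> HP HQ; rewrite {1}(divn_eq Q P) in HQ; move: HQ.
elim: (Q %/ P)%N => [|q IH]; first by rewrite mul0n add0n.
move=> H; apply: IH.
have := vP_sub HP H; rewrite mulSn -addnA addKn; apply.
exact: leq_addr.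
Qed.

Arguments vP_mod {n d v P Q}.

Lemma vP_min_dvd n d v L Q : (0 < L)%N -> vP n d v L ->
  (forall Q, (0 < Q)%N -> vP n d v Q -> (L <= Q)%N) -> vP n d v Q -> (L %| Q)%N.
Proof.
move=> L0 HL Hmin HQ; have := vP_mod HL HQ; rewrite /dvdn.
case: (posnP (Q %% L)%N) => [-> //|pos] H.
by have := Hmin _ pos H; rewrite leqNgt ltn_pmod.
Qed.

Lemma vP_weaken n d e v P : (e %| d)%Z -> vP n d v P -> vP n e v P.
Proof. by move=> ed [K H]; exists K => k Hk; apply: dvdM_trans ed (H k Hk). Qed.

Definition csum n (w : 'cV[int]_n.+1) := \sum_i w i 0.
Arguments csum {n} w.

Lemma csumT n (w : 'cV[int]_n.+1) : csum (Tm n *m w) = 2 * csum w.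
Proof.
rewrite /csum TmE; under eq_bigr do rewrite mxE.
have E : \sum_i w (ordS i) 0 = \sum_i w i 0 by rewrite [RHS](reindex_inj (@ordS_inj n.+1)).
rewrite big_split /= E.
by rewrite mulr_natl mulr2n.
Qed.

Lemma csumTX n k (w : 'cV[int]_n.+1) : csum (Tm n ^+ k *m w) = 2 ^+ k * csum w.
Proof.
elim: k => [|k IH]; first by rewrite expr0 mul1mx mul1r.
by rewrite exprS -mulmxE -mulmxA csumT IH mulrA -exprS.
Qed.

Lemma csumB n (w1 w2 : 'cV[int]_n.+1) : csum (w1 - w2) = csum w1 - csum w2.
Proof. by rewrite /csum -sumrB; apply: eq_bigr => i _; rewrite !mxE. Qed.

Lemma csum_dvd n d (w : 'cV[int]_n.+1) : dvdM d w -> (d %| csum w)%Z.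
Proof. by move=> H; apply: rpred_sum => i _; apply: H. Qed.

Lemma csum_e0 n : csum (va (e0nat n)) = 1.
Proof.
rewrite /csum (bigD1 ord0) //= mxE /e0nat eqxx big1 ?addr0 //.
by move=> i /negbTE hi; rewrite mxE hi.
Qed.

Arguments csum_dvd {n d w}.

Lemma Posz2X k : Posz (2 ^ k)%N = 2 ^+ k.
Proof. by elim: k => // k IH; rewrite expnS PoszM IH exprS. Qed.

Lemma vP_pow2 n (m Q : nat) : vP n m%:Z (va (e0nat n)) Q -> coprime m 2 -> (m %| 2 ^ Q - 1)%N.
Proof.
move=> [K H] cm; have := csum_dvd (H K (leqnn K)).
rewrite mulmxBl csumB !csumTX csum_e0 !mulr1 exprD.
have -> : (2 ^+ K * 2 ^+ Q - 2 ^+ K : int) = Posz (2 ^ K * (2 ^ Q - 1))%N.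
  by rewrite PoszM -subzn ?expn_gt0 // !Posz2X mulrBr mulr1.
rewrite dvdzE !absz_nat Gauss_dvdr //.
by rewrite coprime_sym coprimeXl // coprime_sym.
Qed.

Lemma iterT n m (a : 'I_n.+1 -> nat) k i :
  ((iter k (@Tmap m n.+1) a i)%:Z == (Tm n ^+ k *m va a) i ord0 %[mod m])%Z.
Proof.
elim: k i => [|k IH] i; first by rewrite /= expr0 mul1mx mxE.
rewrite iterS exprS -mulmxE -mulmxA TmE mxE /Tmap -modz_nat.
apply/eqP; rewrite modz_mod PoszD -modzDml (eqP (IH i)) modzDml.
by rewrite -modzDmr (eqP (IH (ordS i))) modzDmr.
Qed.

Lemma natmodz (x y m : nat) : (x = y %[mod m])%N <-> (x%:Z == y%:Z %[mod m])%Z.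
Proof. by rewrite !modz_nat; split => [->|/eqP [->]]. Qed.

Lemma ev_vP n m (a : 'I_n.+1 -> nat) P :
  is_eventual_period m a P <-> vP n m%:Z (va a) P.
Proof.
have E : forall k1 k2 i, (iter k1 (@Tmap m n.+1) a i = iter k2 (@Tmap m n.+1) a i %[mod m])%N
   <-> (m%:Z %| ((Tm n ^+ k1 - Tm n ^+ k2) *m va a) i ord0)%Z.
  move=> k1 k2 i; apply: iff_trans (natmodz _ _ _) _.
  rewrite mulmxBl !mxE -eqz_mod_dvd.
  rewrite (eqP (iterT _ _ _ k1 i)) (eqP (iterT _ _ _ k2 i)) !mxE; exact: iff_refl.
split=> [[N H]|[N H]]; exists N => k Hk.
- by move=> i j; rewrite (ord1 j); apply/E; apply: H.
- by move=> i; apply/E; apply: H.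
Qed.

Lemma dvdM_mulR d e n (A B : 'M[int]_n.+1) : dvdM d A -> dvdM e B -> dvdM (d * e) (A * B).
Proof. by move=> HA HB; rewrite -mulmxE; apply: dvdM_mul. Qed.

Lemma liftM n (d : int) (p : nat) K P : (p%:Z %| d)%Z ->
  dvdM d (Tm n ^+ K * (Tm n ^+ P - 1)) ->
  dvdM (d * p%:Z) (Tm n ^+ (K + K) * (Tm n ^+ (p * P) - 1)).
Proof.
move=> pd H; set X := Tm n.
have e2 : forall i, dvdM d (X ^+ K * X ^+ (P * i) - X ^+ K).
  elim=> [|i IH]; first by rewrite muln0 expr0 mulr1 subrr; exact: dvdM0.
  have -> : X ^+ K * X ^+ (P * i.+1) - X ^+ K =
     (X ^+ K * X ^+ (P * i) - X ^+ K) + (X ^+ K * (X ^+ P - 1)) * X ^+ (P * i).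
    rewrite mulrBr mulr1 mulrBl -!exprD mulnS addnA.
    by rewrite [RHS]addrC [RHS]addrA subrK.
  by apply: dvdMD => //; rewrite -mulmxE; apply: dvdM_mulr.
have Hsum : X ^+ K * \sum_(i < p) (X ^+ P) ^+ i =
    \sum_(i < p) (X ^+ K * X ^+ (P * i) - X ^+ K) + X ^+ K *+ p.
  rewrite sumrB sumr_const card_ord subrK mulr_sumr.
  by apply: eq_bigr => i _; rewrite exprM.
have c : (X ^+ P - 1) * X ^+ K = X ^+ K * (X ^+ P - 1).
  by rewrite mulrBl mulrBr mul1r mulr1 -!exprD addnC.
have -> : X ^+ (K + K) * (X ^+ (p * P) - 1) =
    (X ^+ K * (X ^+ P - 1)) * (X ^+ K * \sum_(i < p) (X ^+ P) ^+ i).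
  by rewrite mulnC exprM subrX1 exprD -!mulrA; congr (_ * _); rewrite !mulrA c.
rewrite Hsum; apply: (@dvdM_mulR _ _ _ _ _ H).
apply: dvdMD; last exact: dvdM_muln.
by apply: dvdM_sum => i; apply: dvdM_trans pd (e2 i).
Qed.

Lemma Pmax_of n (m M : nat) : (0 < M)%N -> OpP n m%:Z M ->
  (forall Q, (0 < Q)%N -> vP n m%:Z (va (e0nat n)) Q -> (M <= Q)%N) -> is_Pmax m n.+1 M.
Proof.
move=> M0 HO Hmin; split.
- exists (e0nat n); split => //; split.
  + by apply/ev_vP; apply: OpP_vP.
  + by move=> Q Q0 /ev_vP HQ; apply: Hmin.
- move=> a P [P0 [_ HP]]; apply: HP => //; apply/ev_vP; exact: OpP_vP.
Qed.

Local Close Scope ring_scope.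

Lemma ex_min (Pr : nat -> Prop) : (exists n, Pr n) -> exists m, Pr m /\ forall k, Pr k -> m <= k.
Proof.
move=> [n Hn]; elim/ltn_ind: n Hn => n IH Hn.
case: (classic (exists k, k < n /\ Pr k)) => [[k [Hk Pk]]|H].
- exact: IH k Hk Pk.
- exists n; split => // k Pk; rewrite leqNgt; apply/negP => Hk; apply: H; by exists k.
Qed.

Arguments vP_weaken {n d e v P}.
Arguments OpP_vP {n d P} v.
Arguments vP_pow2 {n m Q}.
Arguments nw1 {p Q}.
Arguments nw2 {p Q}.
Arguments ex_min {Pr}.

Theorem proposition5p3 (p n : nat) :
  prime p -> 2 < p -> ~ wieferich p -> 0 < n -> ~~ (p %| n) ->
  exists L : nat,
    [/\ is_Pmax p n L, is_Pmax (p ^ 2) n (p * L) & is_Pmax (p ^ 3) n (p ^ 2 * L)].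
Proof.
move=> pp p2 nw; case: n => // n _ pn.
have p0 : 0 < p := prime_gt0 pp.
set r := totient n.+1.
have r0 : 0 < r by rewrite totient_gt0.
have pr0 : 0 < p ^ r by rewrite expn_gt0 p0.
have Hpr : p ^ r = 1 %[mod n.+1].
  by apply: Euler_exp_totient; rewrite prime_coprime.
have Hfrob : OpP n p (p ^ r - 1).
  exists 1.
  have -> : (Tm n ^+ 1 * (Tm n ^+ (p ^ r - 1) - 1) = Tm n ^+ (p ^ r) - Tm n)%R.
    by rewrite expr1 mulrBr mulr1 -exprS subn1 prednK.
  rewrite /Tm (addrC 1%R) -{2}(@SmX1 n _ Hpr); exact: frob_iter.
have pr1 : 1 < p ^ r by rewrite -{1}(expn0 p) ltn_exp2l ?prime_gt1.
have Hex : exists P, 0 < P /\ vP n p (va (e0nat n)) P.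
  exists (p ^ r - 1); split; first by rewrite subn_gt0.
  exact: OpP_vP.
have [L [[L0 HL] Lmin]] := ex_min Hex.
have Lmin' : forall Q, 0 < Q -> vP n p (va (e0nat n)) Q -> L <= Q.
  by move=> Q Q0 HQ; apply: Lmin.
have Ldvd : forall Q, vP n p (va (e0nat n)) Q -> L %| Q.
  by move=> Q; apply: vP_min_dvd.
have pL : ~~ (p %| L).
  apply/negP => pL.
  have h1 : p %| p ^ r - 1 by apply: dvdn_trans pL (Ldvd _ (OpP_vP _ Hfrob)).
  have h2 : p %| p ^ r by apply: dvdn_exp.
  have := dvdn_sub h2 h1; rewrite subKn ?dvdn1 => [/eqP p1|]; last exact: ltnW.
  by rewrite p1 in pp.
have cpL : coprime p L by rewrite prime_coprime.
have HO1 : OpP n p L by apply: vP_OpP.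
have pp2 : (Posz p %| Posz (p ^ 2))%Z by rewrite dvdzE !absz_nat dvdn_exp.
have pp3 : (Posz p %| Posz (p ^ 3))%Z by rewrite dvdzE !absz_nat dvdn_exp.
have HO2 : OpP n (p ^ 2)%N (p * L).
  have [K HK] := HO1; exists (K + K).
  by rewrite -mulnn PoszM; apply: liftM.
have HO3 : OpP n (p ^ 3)%N (p ^ 2 * L).
  have [K HK] := HO2; exists (K + K).
  by rewrite expnSr PoszM -mulnn -mulnA mulnn; apply: liftM.
exists L; split; apply: Pmax_of.
- exact: L0.
- exact: HO1.
- exact: Lmin'.
- by rewrite muln_gt0 p0.
- exact: HO2.
- move=> Q Q0 HQ; apply: dvdn_leq => //.
  have LQ : L %| Q by apply: Ldvd; apply: vP_weaken HQ.
  have := vP_pow2 HQ (@odd_cop2 p 2 pp p2) => /(nw1 pp p2 nw) pQ.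
  by rewrite Gauss_dvd // pQ LQ.
- by rewrite muln_gt0 expn_gt0 p0.
- exact: HO3.
- move=> Q Q0 HQ; apply: dvdn_leq => //.
  have LQ : L %| Q by apply: Ldvd; apply: vP_weaken HQ.
  have := vP_pow2 HQ (@odd_cop2 p 3 pp p2) => /(nw2 pp p2 nw) pQ.
  by rewrite Gauss_dvd ?coprimeXl // pQ LQ.
Qed.
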